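(* Let $\alpha=(a,\alpha_1,\dots,\alpha_r,\varepsilon,\alpha_{r+2},\dots,\alpha_n)$ be an $\tilde{\mathbb N}$-composition, where $r\in\mathbb N$, $a,\alpha_1,\dots,\alpha_r$ are positive integers and $\alpha_{r+2},\dots,\alpha_n\in\{\varepsilon,1,2,\dots\}$. Let $I$ be the ideal of $\mathrm{WCQSym}$ generated by $B_\varepsilon=\{M_\gamma:\gamma\in\mathcal C_\varepsilon\}$. Then $$M_\alpha+M_{(a,\alpha_1,\dots,\alpha_r,\alpha_{r+2},\dots,\alpha_n)}\in I.$$
   Context: $\tilde{\mathbb N}=\mathbb N\cup\{\varepsilon\}$ with $0+\varepsilon=\varepsilon+\varepsilon=\varepsilon$ and $n+\varepsilon=n$ for integers $n\ge1$. $\mathbf{k}$ is a commutative ring containing $\mathbb Q$; $\mathbf{k}[[X]]_{\tilde{\mathbb N}}$, $X=\{x_1<x_2<\cdots\}$, is the algebra of possibly infinite linear combinations of formal monomials $\prod x_i^{f(x_i)}$ with $f$ finitely supported $\tilde{\mathbb N}$-valued, multiplied by adding exponents in $\tilde{\mathbb N}$. An $\tilde{\mathbb N}$-composition is a finite (possibly empty) sequence of elements of $\{\varepsilon,1,2,\dots\}$; $M_{(\gamma_1,\dots,\gamma_k)}=\sum_{1\le i_1<\cdots<i_k}x_{i_1}^{\gamma_1}\cdots x_{i_k}^{\gamma_k}$, $M_\emptyset=1$, and $\mathrm{WCQSym}$ is their $\mathbf k$-span, a subalgebra of $\mathbf{k}[[X]]_{\tilde{\mathbb N}}$. $\mathcal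 C_\varepsilon$ denotes the set of $\tilde{\mathbb N}$-compositions whose first entry is $\varepsilon$. *)

(* Defs.v *)
From Stdlib Require List.
From mathcomp Require Import all_boot all_order all_algebra.
Set Implicit Arguments. Unset Strict Implicit. Unset Printing Implicit Defensive.
Import GRing.Theory.
Local Open Scope ring_scope.

(* The monoid Ñ = N ∪ {ε}: [None] is ε, [Some n] is the integer n. *)
Definition Ntil := option nat.
Definition eps : Ntil := None.

Definition addNt (x y : Ntil) : Ntil :=
  match x, y with
  | Some m, Some n => Some (m + n)%N
  | None, None => None
  | None, Some 0 => None
  | None, Some n => Some n
  | Some 0, None => None
  | Some m, None => Some m
  end.

(* Monomials prod_i x_{i+1}^{f(x_{i+1})}, f finitely supported, encoded by the
   finite exponent sequence s (exponent of x_{i+1} is nth (Some 0) s i;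
   positions beyond size s have exponent 0). *)
Definition monomial := seq Ntil.

(* Elements of k[[X]]_Ñ: arbitrary coefficient functions on monomials.
   (Coefficient functions are only evaluated up to trailing zero exponents;
   all series below are insensitive to those.) *)
Definition series (k : Type) := monomial -> k.

(* candidates for summands: any x,y with addNt x y = s lie in this list *)
Definition candNt (s : Ntil) : seq Ntil :=
  match s with
  | None => [:: None; Some 0%N]
  | Some k => None :: [seq Some i | i <- iota 0 k.+1]
  end.

Definition decompNt (s : Ntil) : seq (Ntil * Ntil) :=
  [seq p <- [seq (x, y) | x <- candNt s, y <- candNt s] | addNt p.1 p.2 == s].

Fixpoint splits (s : monomial) : seq (monomial * monomial) :=
  match s with
  | [::] => [:: ([::], [::])]
  | x :: s' => [seq (p.1 :: q.1, p.2 :: q.2) | p <- decompNt x, q <- splits s']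
  end.

Section Ser.
Variable k : comNzRingType.

Definition addS (F G : series k) : series k := fun s => F s + G s.
Definition scaleS (c : k) (F : series k) : series k := fun s => c * F s.
Definition zeroS : series k := fun _ => 0.
Definition mulS (F G : series k) : series k :=
  fun s => \sum_(p <- splits s) F p.1 * G p.2.

Definition is_comp (g : seq Ntil) : bool := all (fun e => e != Some 0%N) g.

Definition in_Ceps (g : seq Ntil) : bool := is_comp g && (head (Some 0%N) g == eps).

(* M_γ = sum over i_1<...<i_k of x_{i_1}^{γ_1}...x_{i_k}^{γ_k}: the coefficient of
   a monomial is 1 iff its sequence of nonzero exponents (in variable order) is γ. *)
Definition Mser (g : seq Ntil) : series k :=
  fun s => if [seq e <- s | e != Some 0%N] == g then 1 else 0.

Definition in_WCQSym (F : series k) : Prop :=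
  exists L : seq (k * seq Ntil),
    all (fun p => is_comp p.2) L /\
    forall s, F s = foldr addS zeroS [seq scaleS p.1 (Mser p.2) | p <- L] s.

Definition in_ideal_Beps (F : series k) : Prop :=
  exists L : seq (series k * seq Ntil),
    List.Forall (fun p => in_WCQSym p.1) L /\
    all (fun p => in_Ceps p.2) L /\
    forall s, F s = foldr addS zeroS [seq mulS p.1 (Mser p.2) | p <- L] s.
End Ser.

(* Main.v *)
Require Import Defs.
From mathcomp Require Import all_boot all_order all_algebra.
From mathcomp Require Import zify ring.
Set Implicit Arguments. Unset Strict Implicit. Unset Printing Implicit Defensive.
Import GRing.Theory.
Local Open Scope ring_scope.
Fixpoint qsh (u v : seq Ntil) {struct u} : seq (seq Ntil) :=
  match u with
  | [::] => [:: v]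
  | x :: u' =>
    let fix qv (v : seq Ntil) : seq (seq Ntil) :=
      match v with
      | [::] => [:: u]
      | y :: v' => map (cons x) (qsh u' v) ++ map (cons y) (qv v')
                   ++ map (cons (addNt x y)) (qsh u' v')
      end in qv v
  end.

Lemma qsh_nil v : qsh [::] v = [:: v]. Proof. by []. Qed.
Lemma qsh_cons_nil x u : qsh (x :: u) [::] = [:: x :: u]. Proof. by []. Qed.
Lemma qsh_cons x u y v : qsh (x :: u) (y :: v) =
  map (cons x) (qsh u (y :: v)) ++ map (cons y) (qsh (x :: u) v)
  ++ map (cons (addNt x y)) (qsh u v).
Proof. by []. Qed.

Lemma addNt0l q : addNt (Some 0%N) q = q.
Proof. by case: q => [[|n]|]. Qed.
Lemma addNt0r q : addNt q (Some 0%N) = q.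
Proof. by case: q => [[|n]|] //=; rewrite addn0. Qed.

Lemma addNt_nz x y : x != Some 0%N -> y != Some 0%N -> addNt x y != Some 0%N.
Proof.
case: x => [[|m]|]; case: y => [[|n]|] //=.
Qed.

Lemma candNt_None x : None \in candNt x.
Proof. by case: x => [k|]; rewrite /candNt in_cons eqxx. Qed.
Lemma candNt_Some i k : (Some i \in candNt (Some k)) = (i <= k)%N.
Proof. rewrite /candNt in_cons (mem_map (@Some_inj _)) mem_iota. by rewrite orFb add0n ltnS. Qed.
Lemma mem_candNt x p q : addNt p q = x -> (p \in candNt x) && (q \in candNt x).
Proof.
case: p => [[|m]|]; case: q => [[|n]|]; move=> <-;
  rewrite [addNt _ _]/= ?candNt_None ?candNt_Some //=; try lia.
all: by rewrite /candNt !in_cons.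
Qed.
Lemma mem_decompNt x pq : (pq \in decompNt x) = (addNt pq.1 pq.2 == x).
Proof.
rewrite /decompNt mem_filter; case: eqP => //= H.
case: pq H => p q /= H; have /andP[Hp Hq] := mem_candNt H.
exact: (allpairs_f pair Hp Hq).
Qed.
Lemma uniq_candNt x : uniq (candNt x).
Proof.
case: x => [k|] //; rewrite /candNt cons_uniq (map_inj_uniq (@Some_inj _)) iota_uniq andbT.
by apply/mapP => -[i _].
Qed.
Lemma uniq_decompNt x : uniq (decompNt x).
Proof.
rewrite /decompNt filter_uniq // allpairs_uniq ?uniq_candNt //.
by move=> [a b] [c d] _ _ /= [-> ->].
Qed.
Lemma sum_pred1 (R : comNzRingType) (T : eqType) (l : seq T) a (c : R) : uniq l ->
  \sum_(z <- l) (z == a)%:R * c = (a \in l)%:R * c.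
Proof.
elim: l => [|z l IH]; first by rewrite big_nil in_nil mul0r.
rewrite /= big_cons in_cons => /andP[zl ul]; rewrite IH //.
have [E|E] := eqVneq z a.
  by subst z; rewrite (negPf zl) /= mul0r addr0.
by rewrite /= mul0r add0r.
Qed.
Section S.
Variable k : comNzRingType.

Lemma Mser_nil_cons z w : Mser k (z :: w) [::] = 0.
Proof. by []. Qed.
Lemma Mser_nil_nil : Mser k [::] [::] = 1.
Proof. by []. Qed.

Lemma Mser_cons w p t : Mser k w (p :: t) =
  if p == Some 0%N then Mser k w t
  else (if w is y :: w' then (y == p)%:R * Mser k w' t else 0).
Proof.
rewrite /Mser /=; have [->|hp] := eqVneq p (Some 0%N); first by [].
rewrite /=; case: w => [|y w'] //.
rewrite eqseq_cons eq_sym; case: (y == p); rewrite /= ?mul1r ?mul0r //.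
Qed.

Lemma mulS_cons (F G : series k) x s : mulS F G (x :: s) =
  \sum_(pq <- decompNt x) mulS (fun t => F (pq.1 :: t)) (fun t => G (pq.2 :: t)) s.
Proof. by rewrite /mulS /= big_allpairs_dep. Qed.

Lemma mulS_ext (F F' G G' : series k) s : F =1 F' -> G =1 G' -> mulS F G s = mulS F' G' s.
Proof. by move=> HF HG; rewrite /mulS; apply: eq_bigr => p _; rewrite HF HG. Qed.

Lemma mulS_scalel c (F G : series k) s : mulS (fun t => c * F t) G s = c * mulS F G s.
Proof. by rewrite /mulS mulr_sumr; apply: eq_bigr => p _; rewrite mulrA. Qed.
Lemma mulS_scaler c (F G : series k) s : mulS F (fun t => c * G t) s = c * mulS F G s.
Proof. by rewrite /mulS mulr_sumr; apply: eq_bigr => p _; rewrite mulrCA. Qed.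
Lemma mulS_negl (F G : series k) s : mulS (fun t => - F t) G s = - mulS F G s.
Proof. by rewrite /mulS -sumrN; apply: eq_bigr => p _; rewrite mulNr. Qed.

Lemma mulS_1l (G : series k) s : mulS (Mser k [::]) G s = G s.
Proof.
elim: s G => [|x s IH] G; first by rewrite /mulS /= big_cons big_nil Mser_nil_nil mul1r addr0.
rewrite mulS_cons.
transitivity (\sum_(pq <- decompNt x) (pq == (Some 0%N, x))%:R * G (x :: s)).
  apply: eq_big_seq => -[p q]; rewrite mem_decompNt /= => /eqP Hx.
  rewrite (@mulS_ext _ (fun t => (p == Some 0%N)%:R * Mser k [::] t) _ (fun t => G (q :: t))); last 2 first.
  - by move=> t; rewrite Mser_cons; case: (p == _); rewrite ?mul1r ?mul0r.
  - by [].
  rewrite mulS_scalel IH xpair_eqE.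
  have [Ep|Ep] := eqVneq p (Some 0%N); last by rewrite /= !mul0r.
  by subst p; rewrite addNt0l in Hx; subst q; rewrite eqxx.
by rewrite sum_pred1 ?uniq_decompNt // mem_decompNt (addNt0l x) eqxx mul1r.
Qed.

Lemma mulS_1r (F : series k) s : mulS F (Mser k [::]) s = F s.
Proof.
elim: s F => [|x s IH] F; first by rewrite /mulS /= big_cons big_nil Mser_nil_nil mulr1 addr0.
rewrite mulS_cons.
transitivity (\sum_(pq <- decompNt x) (pq == (x, Some 0%N))%:R * F (x :: s)).
  apply: eq_big_seq => -[p q]; rewrite mem_decompNt /= => /eqP Hx.
  rewrite (@mulS_ext _ (fun t => F (p :: t)) _ (fun t => (q == Some 0%N)%:R * Mser k [::] t)); last 2 first.
  - by [].
  - by move=> t; rewrite Mser_cons; case: (q == _); rewrite ?mul1r ?mul0r.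
  rewrite mulS_scaler IH xpair_eqE.
  have [Eq|Eq] := eqVneq q (Some 0%N); last by rewrite andbF /= !mul0r.
  by subst q; rewrite addNt0r in Hx; subst p; rewrite eqxx mul1r.
by rewrite sum_pred1 ?uniq_decompNt // mem_decompNt (addNt0r x) eqxx mul1r.
Qed.

Lemma Mser_cons_nz w z p t : p != Some 0%N -> Mser k (z :: w) (p :: t) = (z == p)%:R * Mser k w t.
Proof. by move=> np; rewrite Mser_cons (negPf np). Qed.

Lemma mulS_Mser u v s : is_comp u -> is_comp v ->
  mulS (Mser k u) (Mser k v) s = \sum_(w <- qsh u v) Mser k w s.
Proof.
elim: s u v => [|x s IH] u v.
  case: u => [|x1 u'] cu cv; first by rewrite qsh_nil big_seq1 mulS_1l.
  case: v cv => [|y1 v'] cv; first by rewrite qsh_cons_nil big_seq1 mulS_1r.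
  rewrite qsh_cons !big_cat !big_map /= /mulS /= big_cons big_nil Mser_nil_cons mul0r addr0.
  by rewrite !big1 ?addr0.
case: u => [|x1 u'] cu cv; first by rewrite qsh_nil big_seq1 mulS_1l.
case: v cv => [|y1 v'] cv; first by rewrite qsh_cons_nil big_seq1 mulS_1r.
rewrite qsh_cons.
move: (cu) (cv) => /= /andP[nx1 cu'] /andP[ny1 cv'].
have [Ex|nx] := eqVneq x (Some 0%N).
  subst x; rewrite mulS_cons.
  have -> : decompNt (Some 0%N) = [:: (Some 0%N, Some 0%N)] by [].
  rewrite big_seq1 (@mulS_ext _ (Mser k (x1 :: u')) _ (Mser k (y1 :: v'))); last 2 first.
  - by move=> t; rewrite Mser_cons.
  - by move=> t; rewrite Mser_cons.
  by rewrite IH //; apply: eq_bigr => w _; rewrite Mser_cons.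
rewrite mulS_cons.
set A := (y1 == x)%:R * mulS (Mser k (x1 :: u')) (Mser k v') s.
set B := (x1 == x)%:R * mulS (Mser k u') (Mser k (y1 :: v')) s.
set C := mulS (Mser k u') (Mser k v') s.
transitivity (\sum_(pq <- decompNt x) ((pq == (Some 0%N, x))%:R * A
   + (pq == (x, Some 0%N))%:R * B + (pq == (x1, y1))%:R * C)).
  apply: eq_big_seq => -[p q]; rewrite mem_decompNt /= => /eqP Hx.
  rewrite (@mulS_ext _ (fun t => if p == Some 0%N then Mser k (x1::u') t else (x1 == p)%:R * Mser k u' t)
     _ (fun t => if q == Some 0%N then Mser k (y1::v') t else (y1 == q)%:R * Mser k v' t)); last 2 first.
  - by move=> t; rewrite Mser_cons.
  - by move=> t; rewrite Mser_cons.
  have [Ep|np] := eqVneq p (Some 0%N).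
    subst p; rewrite addNt0l in Hx; subst q.
    rewrite (negPf nx) mulS_scaler eqxx.
    have -> : ((Some 0%N, x) == (x, Some 0%N)) = false by rewrite xpair_eqE eq_sym (negPf nx).
    have -> : ((Some 0%N, x) == (x1, y1)) = false by rewrite xpair_eqE eq_sym (negPf nx1).
    by rewrite /A mul1r !mul0r !addr0.
  have [Eq|nq] := eqVneq q (Some 0%N).
    subst q; rewrite addNt0r in Hx; subst p.
    rewrite mulS_scalel eqxx.
    have -> : ((x, Some 0%N) == (Some 0%N, x)) = false by rewrite xpair_eqE (negPf nx).
    have -> : ((x, Some 0%N) == (x1, y1)) = false by rewrite xpair_eqE (eq_sym (Some 0%N)) (negPf ny1) andbF.
    by rewrite /B mul1r !mul0r addr0 add0r.
  rewrite mulS_scalel mulS_scaler !xpair_eqE (negPf np) (negPf nq) /= andbF.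
  rewrite !mul0r !add0r /C mulrA; congr (_ * _).
  by case: (x1 =P p) => [->|] /=; case: (y1 =P q) => [->|] /=; rewrite ?eqxx ?mul1r ?mul0r //;
     move=> /eqP/negPf H; rewrite ?(eq_sym p) ?(eq_sym q) H ?andbF ?mulr0 ?mul0r.
rewrite !big_split !sum_pred1 ?uniq_decompNt // !mem_decompNt (addNt0l x) (addNt0r x) eqxx.
rewrite !big_cat !big_map.
rewrite (eq_bigr (fun w => (x1 == x)%:R * Mser k w s)); last by move=> w _; rewrite Mser_cons_nz.
rewrite (eq_bigr (fun w => (y1 == x)%:R * Mser k w s) (P := xpredT) (r := qsh (x1 :: u') v')); last by move=> w _; rewrite Mser_cons_nz.
rewrite (eq_bigr (fun w => (addNt x1 y1 == x)%:R * Mser k w s) (P := xpredT) (r := qsh u' v')); last by move=> w _; rewrite Mser_cons_nz.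
rewrite -!mulr_sumr /A /B /C !IH //.
set S1 := \sum_(w <- qsh u' (y1 :: v')) _; set S2 := \sum_(w <- qsh (x1 :: u') v') _; set S3 := \sum_(w <- qsh u' v') _.
rewrite /=. ring.
Qed.

Lemma foldr_addS (l : seq (series k)) s : foldr (@addS k) (@zeroS k) l s = \sum_(f <- l) f s.
Proof. by elim: l => [|f l IH]; rewrite ?big_nil ?big_cons //= /addS IH. Qed.

Lemma ideal_ext (F G : series k) : (forall s, F s = G s) -> in_ideal_Beps G -> in_ideal_Beps F.
Proof. by move=> E [L [H1 [H2 H3]]]; exists L; split; [|split] => // s; rewrite E H3. Qed.

Lemma ideal0 : in_ideal_Beps (fun _ => 0 : k).
Proof. by exists [::]; split=> //. Qed.

Lemma idealD (F G : series k) : in_ideal_Beps F -> in_ideal_Beps G ->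
  in_ideal_Beps (fun s => F s + G s).
Proof.
move=> [L1 [H1 [H2 H3]]] [L2 [G1 [G2 G3]]]; exists (L1 ++ L2); split.
  by apply/List.Forall_app; split.
split; first by rewrite all_cat H2 G2.
by move=> s; rewrite H3 G3 !foldr_addS map_cat big_cat.
Qed.

Lemma WCQSymN (F : series k) : in_WCQSym F -> in_WCQSym (fun s => - F s).
Proof.
move=> [L [H1 H2]]; exists [seq (- p.1, p.2) | p <- L]; split.
  by rewrite all_map; apply: sub_all H1 => p.
move=> s; rewrite H2 !foldr_addS !big_map -sumrN.
by apply: eq_bigr => p _; rewrite /scaleS mulNr.
Qed.

Lemma idealN (F : series k) : in_ideal_Beps F -> in_ideal_Beps (fun s => - F s).
Proof.
move=> [L [H1 [H2 H3]]]; exists [seq ((fun s => - p.1 s) : series k, p.2) | p <- L]; split.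
  elim: L H1 {H2 H3} => [|p L IH] H1 /=; first by constructor.
  inversion H1; constructor; [exact: WCQSymN | exact: IH].
split; first by rewrite all_map; apply: sub_all H2 => p.
move=> s; rewrite H3 !foldr_addS !big_map -sumrN.
by apply: eq_bigr => p _; rewrite /= mulS_negl.
Qed.

Lemma idealB (F G : series k) : in_ideal_Beps F -> in_ideal_Beps G ->
  in_ideal_Beps (fun s => F s - G s).
Proof. by move=> HF HG; apply: idealD => //; apply: idealN. Qed.

Lemma ideal_prod b g : is_comp b -> in_Ceps g -> in_ideal_Beps (mulS (Mser k b) (Mser k g)).
Proof.
move=> cb cg; exists [:: (Mser k b, g)]; split.
  constructor; last by constructor.
  by exists [:: (1, b)]; split; [rewrite /= cb | move=> s; rewrite /= /addS /scaleS mul1r /zeroS addr0].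
split; first by rewrite /= cg.
by move=> s; rewrite /= /addS /zeroS addr0.
Qed.

Lemma ideal_gen g : in_Ceps g -> in_ideal_Beps (Mser k g).
Proof.
move=> cg; apply: (@ideal_ext _ (mulS (Mser k [::]) (Mser k g))); first by move=> s; rewrite mulS_1l.
exact: ideal_prod.
Qed.

Lemma ideal_sum (T : eqType) (l : seq T) (f : T -> series k) :
  (forall w, w \in l -> in_ideal_Beps (f w)) ->
  in_ideal_Beps (fun s => \sum_(w <- l) f w s).
Proof.
elim: l => [|w l IH] H.
  by apply: (ideal_ext (G := fun _ => 0)) ideal0 => s; rewrite big_nil.
apply: (ideal_ext (G := fun s => f w s + \sum_(w <- l) f w s)); first by move=> s; rewrite big_cons.
apply: idealD; first by apply: H; rewrite mem_head.
by apply: IH => v vl; apply: H; rewrite in_cons vl orbT.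
Qed.

Lemma qsh_comp u v : is_comp u -> is_comp v -> forall w, w \in qsh u v -> is_comp w.
Proof.
elim: u v => [|x u IHu] v cu cv w.
  by rewrite qsh_nil mem_seq1 => /eqP ->.
move: (cu) => /= /andP[nx cu'].
elim: v cv w => [|y v IHv] cv w.
  by rewrite mem_seq1 => /eqP ->; rewrite /= nx.
move: (cv) => /= /andP[ny cv'].
rewrite !mem_cat => /or3P [] /mapP [w' hw' ->] /=.
- by rewrite nx (IHu (y :: v)).
- by rewrite ny (IHv cv').
- by rewrite addNt_nz // (IHu v).
Qed.

Definition pos (l : seq nat) := all (fun x => 0 < x)%N l.

Lemma comp_map l : pos l -> is_comp [seq Some x | x <- l].
Proof. by elim: l => [|x l IH] //= /andP[hx hl]; rewrite IH // andbT; case: x hx. Qed.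

Definition Hs (c b : seq nat) (T : seq Ntil) : series k := fun s =>
  \sum_(w <- qsh [seq Some x | x <- b] (None :: T)) Mser k ([seq Some x | x <- c] ++ w) s
  + \sum_(w <- qsh [seq Some x | x <- b] T) Mser k ([seq Some x | x <- c] ++ w) s.

Lemma Hs_base b bs T : (0 < b)%N -> pos bs -> is_comp T -> in_ideal_Beps (Hs [:: b] bs T).
Proof.
move=> hb pbs cT.
have cb : is_comp (Some b :: [seq Some x | x <- bs]) by apply: (comp_map (l := b :: bs)); rewrite /pos /= hb.
apply: (ideal_ext (G := fun s => mulS (Mser k (Some b :: [seq Some x | x <- bs])) (Mser k (None :: T)) s
   - \sum_(w <- qsh (Some b :: [seq Some x | x <- bs]) T) Mser k (None :: w) s)).
  move=> s; rewrite mulS_Mser //.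
  rewrite qsh_cons !big_cat !big_map /Hs.
  have key : forall a1 a2 c d e : k, a1 = a2 -> d = e -> a1 + d = a2 + (c + e) - c.
    by move=> a1 a2 c d e -> ->; rewrite addrCA addrC addrK.
  case: b hb {cb} => [|b] // _.
  by apply: key.
apply: idealB; first by apply: ideal_prod => //; rewrite /in_Ceps /= cT.
apply: ideal_sum => w hw; apply: ideal_gen.
by rewrite /in_Ceps /= andbT (qsh_comp cb cT hw).
Qed.

Lemma Hs_step c b bs T s : (0 < b)%N -> Hs c (b :: bs) T s =
  Hs (rcons c b) bs T s + \sum_(w <- qsh (Some b :: [seq Some x | x <- bs]) T) Hs c [::] w s.
Proof.
move=> hb.
have E : forall w, Hs c [::] w s = Mser k ([seq Some x | x <- c] ++ None :: w) s
   + Mser k ([seq Some x | x <- c] ++ w) s by move=> w; rewrite /Hs /= !big_seq1.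
rewrite (eq_bigr _ (fun w _ => E w)) /Hs.
rewrite big_split map_rcons.
have -> : [seq Some x | x <- b :: bs] = Some b :: [seq Some x | x <- bs] by [].
rewrite qsh_cons !big_cat !big_map.
have -> : addNt (Some b) None = Some b by case: b hb.
have key2 : forall a a' b0 c0 c' d : k, a = a' -> c0 = c' -> a + (b0 + c0) + d = a' + c' + (b0 + d).
  by move=> a a' b0 c0 c' d -> ->; rewrite -!addrA; congr (_ + _); rewrite addrCA.
by apply: key2; apply: eq_bigr => w _; rewrite cat_rcons.
Qed.

Lemma Hs_main n : forall c, size c = n.+1 -> pos c -> forall bs T, pos bs -> is_comp T ->
  in_ideal_Beps (Hs c bs T).
Proof.
elim: n => [|n IH] c.
  case: c => [|b [|]] // _ /= /andP[hb _] bs T pbs cT; exact: Hs_base.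
case/lastP: c => [|c0 b] //; rewrite size_rcons => -[sc0].
rewrite /pos all_rcons => /andP[hb pc0] bs T pbs cT.
apply: (ideal_ext (G := fun s => Hs c0 (b :: bs) T s -
   \sum_(w <- qsh (Some b :: [seq Some x | x <- bs]) T) Hs c0 [::] w s)).
  by move=> s; rewrite Hs_step // addrK.
apply: idealB; first by apply: IH => //=; rewrite hb.
apply: ideal_sum => w hw; apply: IH => //.
have cb : is_comp (Some b :: [seq Some x | x <- bs]) by apply: (comp_map (l := b :: bs)); rewrite /pos /= hb.
exact: qsh_comp cb cT w hw.
Qed.
End S.

Theorem lemma3p10 (k : comUnitRingType)
  (hQ : forall n : nat, (n.+1)%:R \is a @GRing.unit k)
  (a : nat) (alphas : seq nat) (tail : seq Ntil)
  (ha : (0 < a)%N) (halphas : all (fun x => (0 < x)%N) alphas)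
  (htail : is_comp tail) :
  in_ideal_Beps
    (addS (Mser k (Some a :: [seq Some x | x <- alphas] ++ eps :: tail))
          (Mser k (Some a :: [seq Some x | x <- alphas] ++ tail))).
Proof.
apply: (ideal_ext (G := Hs k (a :: alphas) [::] tail)).
  by move=> s; rewrite /Hs /addS /= !big_seq1.
apply: (@Hs_main k (size alphas)) => //=.
by rewrite ha.
Qed.
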